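(* Let $Q\in\mathbb{R}^{n\times n}$ be any symmetric matrix (not necessarily definite), $\mathcal{S}=\{x\in\mathbb{R}^n: x^TQx\le1\}$, and $A\in\mathbb{R}^{n\times n}$. Then $\mathcal{S}$ is an invariant set for the discrete system $x_{k+1}=Ax_k$ (i.e., $A\mathcal{S}\subseteq\mathcal{S}$) if and only if there exists $\mu\in[0,1]$ such that $A^TQA-\mu Q\preceq0$.
   Context: $\preceq 0$ denotes negative semidefiniteness of a symmetric matrix. *)

(* Defs.v *)
(* real numbers as an arbitrary real closed field R. *)
From HB Require Import structures.
From mathcomp Require Import all_boot all_order all_algebra.
Set Implicit Arguments. Unset Strict Implicit. Unset Printing Implicit Defensive.
Import Order.TTheory GRing.Theory Num.Theory.
Local Open Scope ring_scope.

Definition qform (R : rcfType) (n : nat) (M : 'M[R]_n) (x : 'cV[R]_n) : R :=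
  (x^T *m M *m x) 0 0.

Definition neg_semidef (R : rcfType) (n : nat) (M : 'M[R]_n) : Prop :=
  forall x : 'cV[R]_n, qform M x <= 0.

Definition sublevel1 (R : rcfType) (n : nat) (Q : 'M[R]_n) : 'cV[R]_n -> Prop :=
  fun x => qform Q x <= 1.

Definition invariant_set (R : rcfType) (n : nat) (A : 'M[R]_n)
  (S : 'cV[R]_n -> Prop) : Prop :=
  forall x, S x -> S (A *m x).

(* Main.v *)
Require Import Defs.
From HB Require Import structures.
From mathcomp Require Import all_boot all_order all_algebra.
From mathcomp Require polyrcf qe_rcf ordered_qelim.
From mathcomp Require Import ring lra.
From Stdlib Require Import Classical.
Set Implicit Arguments. Unset Strict Implicit. Unset Printing Implicit Defensive.
Import Order.TTheory GRing.Theory Num.Theory.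
Local Open Scope ring_scope.

Section Omin.
Variable R : rcfType.

Lemma term_poly (e : seq R) (u : GRing.term R) : GRing.rterm u ->
  exists P : {poly R}, forall t, GRing.eval (t :: e) u = P.[t].
Proof.
elim: u => /=.
- case=> [|i] _; first by exists 'X => t; rewrite hornerX.
  by exists (e`_i)%:P => t; rewrite hornerC.
- by move=> c _; exists c%:P => t; rewrite hornerC.
- by move=> k _; exists k%:R%:P => t; rewrite hornerC.
- move=> u1 IH1 u2 IH2 /andP[/IH1 [P1 H1] /IH2 [P2 H2]].
  by exists (P1 + P2) => t; rewrite hornerD H1 H2.
- move=> u1 IH1 /IH1 [P1 H1]; exists (- P1) => t; by rewrite hornerN H1.
- move=> u1 IH1 k /IH1 [P1 H1]; exists (P1 *+ k) => t; by rewrite hornerMn H1.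
- move=> u1 IH1 u2 IH2 /andP[/IH1 [P1 H1] /IH2 [P2 H2]].
  by exists (P1 * P2) => t; rewrite hornerM H1 H2.
- by [].
- move=> u1 IH1 k /IH1 [P1 H1]; exists (P1 ^+ k) => t; by rewrite horner_exp H1.
Qed.

Definition nobp (rs : seq R) (t1 t2 : R) := forall r, r \in rs -> (r < t1) \/ (t2 < r).

Lemma nobp_catl rs1 rs2 t1 t2 : nobp (rs1 ++ rs2) t1 t2 -> nobp rs1 t1 t2.
Proof. by move=> H r hr; apply: H; rewrite mem_cat hr. Qed.
Lemma nobp_catr rs1 rs2 t1 t2 : nobp (rs1 ++ rs2) t1 t2 -> nobp rs2 t1 t2.
Proof. by move=> H r hr; apply: H; rewrite mem_cat hr orbT. Qed.

Lemma poly_bp (P : {poly R}) : exists rs, forall t1 t2, t1 <= t2 -> nobp rs t1 t2 ->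
  Num.sg P.[t1] = Num.sg P.[t2].
Proof.
have [->|P0] := eqVneq P 0; first by exists [::] => *; rewrite !horner0.
exists (polyrcf.roots P (- polyrcf.cauchy_bound P) (polyrcf.cauchy_bound P)).
move=> t1 t2 le12 nb.
have hi : {in `[t1, t2], forall x, ~~ root P x}.
  move=> x hx; apply/negP => rx.
  have xin := polyrcf.root_in_cauchy_bound P0 rx.
  have := polyrcf.root_in_roots P0 xin rx => /nb.
  move: hx; rewrite in_itv /= => /andP[h1 h2].
  by case=> h; [move: (lt_le_trans h h1); rewrite ltxx | move: (le_lt_trans h2 h); rewrite ltxx].
symmetry; apply: (polyrcf.polyrN0_itv hi); rewrite in_itv /= ?lexx ?le12 //.
Qed.

Lemma qf_bp (e : seq R) (f : ordered_qelim.ord.formula R) :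
  ordered_qelim.ord.qf_form f -> ordered_qelim.ord.rformula f ->
  exists rs, forall t1 t2, t1 <= t2 -> nobp rs t1 t2 ->
    ordered_qelim.ord.qf_eval (t1 :: e) f = ordered_qelim.ord.qf_eval (t2 :: e) f.
Proof.
have atom : forall u v : GRing.term R, GRing.rterm u -> GRing.rterm v ->
   exists rs, forall t1 t2, t1 <= t2 -> nobp rs t1 t2 ->
   Num.sg (GRing.eval (t1 :: e) v - GRing.eval (t1 :: e) u) =
   Num.sg (GRing.eval (t2 :: e) v - GRing.eval (t2 :: e) u).
  move=> u v /(term_poly e) [Pu Hu] /(term_poly e) [Pv Hv].
  have [rs Hrs] := poly_bp (Pv - Pu).
  by exists rs => t1 t2 le12 nb; rewrite !Hu !Hv; have := Hrs t1 t2 le12 nb; rewrite !hornerD !hornerN.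
elim: f => /=.
- by move=> b _ _; exists [::].
- move=> u v _ /andP[ru rv]; have [rs Hrs] := atom u v ru rv.
  exists rs => t1 t2 le12 nb; have := Hrs t1 t2 le12 nb.
  by rewrite eq_sym -subr_eq0 -sgr_eq0 => ->; rewrite sgr_eq0 subr_eq0 eq_sym.
- move=> u v _ /andP[ru rv]; have [rs Hrs] := atom u v ru rv.
  exists rs => t1 t2 le12 nb; have := Hrs t1 t2 le12 nb.
  by rewrite -subr_gt0 -sgr_cp0 => ->; rewrite sgr_cp0 subr_gt0.
- move=> u v _ /andP[ru rv]; have [rs Hrs] := atom u v ru rv.
  exists rs => t1 t2 le12 nb; have := Hrs t1 t2 le12 nb.
  by move=> H; rewrite -subr_ge0 -sgr_ge0 H sgr_ge0 subr_ge0.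
- by move=> u _ /negP.
- move=> f1 IH1 f2 IH2 /andP[q1 q2] /andP[r1 r2].
  have [rs1 H1] := IH1 q1 r1; have [rs2 H2] := IH2 q2 r2.
  exists (rs1 ++ rs2) => t1 t2 le12 nb.
  by rewrite (H1 t1 t2 le12 (nobp_catl nb)) (H2 t1 t2 le12 (nobp_catr nb)).
- move=> f1 IH1 f2 IH2 /andP[q1 q2] /andP[r1 r2].
  have [rs1 H1] := IH1 q1 r1; have [rs2 H2] := IH2 q2 r2.
  exists (rs1 ++ rs2) => t1 t2 le12 nb.
  by rewrite (H1 t1 t2 le12 (nobp_catl nb)) (H2 t1 t2 le12 (nobp_catr nb)).
- move=> f1 IH1 f2 IH2 /andP[q1 q2] /andP[r1 r2].
  have [rs1 H1] := IH1 q1 r1; have [rs2 H2] := IH2 q2 r2.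
  exists (rs1 ++ rs2) => t1 t2 le12 nb.
  by rewrite (H1 t1 t2 le12 (nobp_catl nb)) (H2 t1 t2 le12 (nobp_catr nb)).
- move=> f1 IH1 q1 r1; have [rs1 H1] := IH1 q1 r1.
  by exists rs1 => t1 t2 le12 nb; rewrite (H1 t1 t2 le12 nb).
- by move=> i f1 _ /negP.
- by move=> i f1 _ /negP.
Qed.
End Omin.

Section Sup.
Variable R : rcfType.
Notation nobp := (@nobp R).

Lemma seq_max (rs : seq R) : rs != [::] -> exists2 m, m \in rs & forall r, r \in rs -> r <= m.
Proof.
elim: rs => // a s IH _.
have [->|sn] := eqVneq s [::].
  by exists a; rewrite ?mem_seq1 // => r; rewrite mem_seq1 => /eqP ->.
have [m ms Hm] := IH sn.
have [am|ma] := leP a m.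
  exists m; first by rewrite in_cons ms orbT.
  by move=> r; rewrite in_cons => /orP[/eqP ->|/Hm].
exists a; first by rewrite in_cons eqxx.
by move=> r; rewrite in_cons => /orP[/eqP ->|/Hm h] //; rewrite (le_trans h) // ltW.
Qed.

Lemma seq_minP (P : R -> Prop) (rs : seq R) : (exists2 r, r \in rs & P r) ->
  exists c, [/\ c \in rs, P c & forall r, r \in rs -> P r -> c <= r].
Proof.
elim: rs => [[r]//|a s IH [r rin Pr]].
case: (classic (exists2 r, r \in s & P r)) => [/IH [c [cs Pc Hc]]|nos].
  case: (classic (P a)) => Pa.
    have [ac|ca] := leP a c.
      exists a; split => //; first by rewrite in_cons eqxx.
      by move=> x; rewrite in_cons => /orP[/eqP ->//|xs Px]; rewrite (le_trans ac) // Hc.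
    exists c; split => //; first by rewrite in_cons cs orbT.
    by move=> x; rewrite in_cons => /orP[/eqP ->|xs Px]; [rewrite ltW | rewrite Hc].
  exists c; split => //; first by rewrite in_cons cs orbT.
  by move=> x; rewrite in_cons => /orP[/eqP ->//|xs Px]; rewrite Hc.
have Pa : P a.
  move: rin; rewrite in_cons => /orP[/eqP <-//|rs]; by case: nos; exists r.
exists a; split => //; first by rewrite in_cons eqxx.
by move=> x; rewrite in_cons => /orP[/eqP ->//|xs Px]; case: nos; exists x.
Qed.

Lemma seq_above (G : R -> Prop) (Q : R -> Prop) (rs : seq R) :
  (forall r, r \in rs -> Q r -> exists t, G t /\ r < t) -> (exists t, G t) ->
  exists t, G t /\ forall r, r \in rs -> Q r -> r < t.
Proof.
elim: rs => [_ [t Gt]|a s IH H Ht]; first by exists t.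
have [t [Gt Ht']] : exists t, G t /\ forall r, r \in s -> Q r -> r < t.
  apply: IH Ht => r rs; apply: H; by rewrite in_cons rs orbT.
case: (classic (Q a)) => Qa.
  have [ta [Gta ata]] := H a (mem_head _ _) Qa.
  have [tta|tat] := leP t ta.
    exists ta; split => // r; rewrite in_cons => /orP[/eqP -> //|rs Qr].
    by rewrite (lt_le_trans (Ht' r rs Qr)).
  exists t; split => // r; rewrite in_cons => /orP[/eqP -> _|rs Qr].
    by rewrite (lt_trans ata).
  by apply: Ht'.
exists t; split => // r; rewrite in_cons => /orP[/eqP -> //|rs Qr].
by apply: Ht'.
Qed.

Lemma sup_bp (G : R -> Prop) (rs : seq R) :
  (forall t1 t2, t1 <= t2 -> nobp rs t1 t2 -> (G t1 <-> G t2)) ->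
  (exists t, G t) -> (exists B, forall t, G t -> t <= B) ->
  exists c, (forall t, G t -> t <= c) /\ (forall u, u < c -> exists t, G t /\ u < t).
Proof.
move=> Hbp [t0 Gt0] [B HB].
pose UB c := forall t, G t -> t <= c.
have above : forall t, G t -> exists2 r, r \in rs & t <= r.
  move=> t Gt; apply: NNPP => nr.
  have mr : t <= Num.max B t by rewrite le_max lexx orbT.
  have ml : B <= Num.max B t by rewrite le_max lexx.
  have le1 : t <= Num.max B t + 1.
    by rewrite (le_trans mr) // lerDl.
  have : G (Num.max B t + 1).
    apply/(Hbp _ _ le1) => // r rin.
    have [rt|tr] := ltP r t; first by left.
    by case: nr; exists r.
  move/HB; rewrite leNgt => /negP; apply.
  by rewrite (le_lt_trans ml) // ltrDl.
have rsn : rs != [::] by have [r] := above t0 Gt0; case: rs {Hbp above}.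
have [m mrs Hm] := seq_max rsn.
have UBm : UB m by move=> t /above [r rin tr]; rewrite (le_trans tr) // Hm.
have [c [crs UBc Hc]] := @seq_minP UB rs (ex_intro2 _ _ m mrs UBm).
exists c; split => // u uc.
apply: NNPP => H.
have Hu : forall t, G t -> t <= u.
  move=> t Gt; rewrite leNgt; apply/negP => ut; apply: H; by exists t.
have [ts [Gts Hts]] : exists t, G t /\ forall r, r \in rs -> r < c -> r < t.
  apply: seq_above; last by exists t0.
  move=> r rin rc; apply: NNPP => nt.
  have : UB r.
    move=> t Gt; rewrite leNgt; apply/negP => rt; apply: nt; by exists t.
  by move/(Hc r rin); rewrite leNgt rc.
have tsu := Hu ts Gts.
pose v := (u + c) / 2%:R.
have uv : u < v by rewrite /v ltr_pdivlMr // mulr_natr mulr2n ltrD2l.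
have vc : v < c by rewrite /v ltr_pdivrMr // mulr_natr mulr2n ltrD2r.
have : G v.
  apply/(Hbp ts v (le_trans tsu (ltW uv))) => // r rin.
  have [rc|cr] := ltP r c; first by left; apply: Hts.
  by right; apply: lt_le_trans cr.
move/Hu; rewrite leNgt uv //.
Qed.
End Sup.

Section Form.
Variables (R : rcfType) (n : nat).
Notation oform := (ordered_qelim.ord.formula R).

Definition qterm (M : 'M[R]_n) : GRing.term R :=
  foldr (fun ij acc => GRing.Add (GRing.Mul (GRing.Mul (GRing.Const (M ij.1 ij.2))
     (GRing.Var R ij.1.+1)) (GRing.Var R ij.2.+1)) acc) (GRing.NatConst R 0)
     (enum {: 'I_n * 'I_n}).

Definition env (t : R) (x : 'cV[R]_n) : seq R := t :: [seq x i 0 | i <- enum 'I_n].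

Lemma nth_env t x (i : 'I_n) : (env t x)`_i.+1 = x i 0.
Proof.
rewrite /env /= (nth_map i) ?size_enum_ord //.
by rewrite nth_ord_enum.
Qed.

Lemma nth_map_enum (x : 'cV[R]_n) (i : 'I_n) : [seq x i 0 | i <- enum 'I_n]`_i = x i 0.
Proof. by rewrite (nth_map i) ?size_enum_ord // nth_ord_enum. Qed.

Lemma qformE (M : 'M[R]_n) x :
  qform M x = \sum_(ij : 'I_n * 'I_n) M ij.1 ij.2 * x ij.1 0 * x ij.2 0.
Proof.
rewrite /qform mxE -(pair_big xpredT xpredT (fun i j => M i j * x i 0 * x j 0)) /=.
rewrite exchange_big /=; apply: eq_bigr => j _.
rewrite mxE big_distrl /=; apply: eq_bigr => i _.
by rewrite mxE mulrAC mulrC mulrA.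
Qed.

Lemma eval_qterm t x M : GRing.eval (env t x) (qterm M) = qform M x.
Proof.
rewrite qformE /qterm -big_enum /=.
elim: (enum _) => [|ij s IH] /=; first by rewrite big_nil.
by rewrite big_cons IH !nth_map_enum mulrAC.
Qed.

Lemma rterm_qterm M : GRing.rterm (qterm M).
Proof. by rewrite /qterm; elim: (enum _). Qed.

Fixpoint set_nths (e : seq R) (k : nat) (s : seq R) : seq R :=
  match s with [::] => e | x :: s' => set_nths (set_nth 0 e k x) k.+1 s' end.

Lemma set_nths_cat e s : set_nths e (size e) s = e ++ s.
Proof.
elim: s e => [|x s IH] e /=; first by rewrite cats0.
have -> : set_nth 0 e (size e) x = rcons e x.
  by elim: e {IH} => //= a e ->.
by rewrite -(size_rcons e x) IH cat_rcons.
Qed.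

Lemma holds_exs (e : seq R) k m (f : oform) :
  ordered_qelim.ord.holds e (foldr (fun i g => ordered_qelim.ord.Exists i g) f (iota k m))
  <-> exists s, size s = m /\ ordered_qelim.ord.holds (set_nths e k s) f.
Proof.
elim: m e k => [|m IH] e k.
  split => [h|[s [/size0nil -> //]]]; by exists [::].
split.
  move=> [x]; rewrite -/(foldr _ _ _) => /IH [s [ss hs]].
  by exists (x :: s); rewrite /= ss.
case=> [[|x s] [//= ss hs]].
exists x; apply/IH; exists s; split => //; by case: ss.
Qed.

Definition body (P Q : 'M[R]_n) : oform :=
  ordered_qelim.ord.And (ordered_qelim.ord.Lt (GRing.NatConst R 0) (qterm Q))
    (ordered_qelim.ord.Equal (GRing.Mul (GRing.Var R 0) (qterm Q)) (qterm P)).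

Definition phi (P Q : 'M[R]_n) : oform :=
  ordered_qelim.ord.Or (ordered_qelim.ord.Equal (GRing.Var R 0) (GRing.NatConst R 0))
    (foldr (fun i g => ordered_qelim.ord.Exists i g) (body P Q) (iota 1 n)).

Lemma env_col t (s : seq R) : size s = n -> env t (\col_(i < n) s`_i) = t :: s.
Proof.
move=> ss; rewrite /env; congr (_ :: _).
apply: (@eq_from_nth _ 0); first by rewrite size_map size_enum_ord.
move=> i; rewrite size_map size_enum_ord => lin.
by rewrite (nth_map (Ordinal lin)) ?size_enum_ord // mxE nth_enum_ord.
Qed.

Lemma holds_phi P Q t : ordered_qelim.ord.holds [:: t] (phi P Q) <->
  t = 0 \/ exists x, 0 < qform Q x /\ t * qform Q x = qform P x.
Proof.
have hb : forall x, ordered_qelim.ord.holds (env t x) (body P Q) <->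
    0 < qform Q x /\ t * qform Q x = qform P x.
  by move=> x; rewrite /= !eval_qterm.
rewrite /phi /=; split.
- case=> [->|]; first by left.
  move/holds_exs => [s [ss hs]]; right.
  exists (\col_(i < n) s`_i); apply/hb.
  by rewrite env_col //; move: hs; rewrite (set_nths_cat [:: t]).
- case=> [->|[x /hb hx]]; first by left.
  right; apply/holds_exs; exists [seq x i 0 | i <- enum 'I_n].
  by rewrite size_map size_enum_ord (set_nths_cat [:: t]).
Qed.
End Form.

Section Q.
Variables (R : rcfType) (n : nat).
Definition cross (M : 'M[R]_n) (x y : 'cV[R]_n) := (x^T *m M *m y) 0 0 + (y^T *m M *m x) 0 0.

Lemma qform_mul (Q A : 'M[R]_n) x : qform Q (A *m x) = qform (A^T *m Q *m A) x.
Proof. by rewrite /qform trmx_mul !mulmxA. Qed.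

Lemma qformB (M N : 'M[R]_n) mu x : qform (M - mu *: N) x = qform M x - mu * qform N x.
Proof.
by rewrite /qform mulmxBr mulmxBl -scalemxAr -scalemxAl !mxE.
Qed.

Lemma qform_comb (M : 'M[R]_n) s x y :
  qform M (s *: x + y) = s ^+ 2 * qform M x + s * cross M x y + qform M y.
Proof.
rewrite /qform /cross.
rewrite [(s *: x + y)^T]raddfD /= [(s *: x)^T]linearZ /=.
rewrite !mulmxDl !mulmxDr -!scalemxAl -!scalemxAr.
rewrite !mxE; ring.
Qed.

Lemma qformZ (M : 'M[R]_n) s x : qform M (s *: x) = s ^+ 2 * qform M x.
Proof.
have := qform_comb M s x 0; rewrite addr0 => ->.
by rewrite /qform /cross trmx0 !mul0mx !mulmx0 !mxE; ring.
Qed.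

Lemma twoD (P Q : 'M[R]_n) (C1 : forall z, qform Q z <= 0 -> qform P z <= 0) x y :
  0 < qform Q x -> qform Q y < 0 -> qform P y * qform Q x <= qform P x * qform Q y.
Proof.
set a := qform Q x; set c0 := qform Q y; set k := cross Q x y.
set al := qform P x; set be := cross P x y; set ga := qform P y.
move=> a0 c00.
have Dpos : 0 < k ^+ 2 - 4%:R * a * c0 by nra.
set r := Num.sqrt (k ^+ 2 - 4%:R * a * c0).
have r2 : r ^+ 2 = k ^+ 2 - 4%:R * a * c0 by rewrite sqr_sqrtr // ltW.
have r0 : 0 <= r by rewrite sqrtr_ge0.
have rk1 : k < r by nra.
have rk2 : - k < r by nra.
have a2 : 2%:R * a != 0 by rewrite mulf_neq0 // ?pnatr_eq0 // gt_eqF.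
pose s1 := (- k - r) / (2%:R * a); pose s2 := (- k + r) / (2%:R * a).
have hu1 : 2%:R * a * s1 = - k - r by rewrite /s1 mulrC divfK.
have hu2 : 2%:R * a * s2 = - k + r by rewrite /s2 mulrC divfK.
have quad : forall s, 2%:R * a * s = - k - r \/ 2%:R * a * s = - k + r ->
    s ^+ 2 * a + s * k + c0 = 0.
  move=> s hs.
  have E : 4%:R * a * (s ^+ 2 * a + s * k + c0) =
     (2%:R * a * s) ^+ 2 + 2%:R * k * (2%:R * a * s) + 4%:R * a * c0 by ring.
  have E2 : 4%:R * a * (s ^+ 2 * a + s * k + c0) = 0.
    have h4 : 4%:R * a * c0 = k ^+ 2 - r ^+ 2 by rewrite r2; ring.
    by rewrite E h4; case: hs => ->; ring.
  by move/eqP: E2; rewrite mulf_eq0 mulf_eq0 pnatr_eq0 (gt_eqF a0) /= => /eqP.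
have hq1 := quad s1 (or_introl hu1).
have hq2 := quad s2 (or_intror hu2).
have s1n : s1 < 0.
  rewrite /s1 pmulr_llt0 ?invr_gt0 ?mulr_gt0 //; lra.
have s2p : 0 < s2.
  rewrite /s2 pmulr_lgt0 ?invr_gt0 ?mulr_gt0 //; lra.
have pz : forall s, s ^+ 2 * a + s * k + c0 = 0 -> s ^+ 2 * al + s * be + ga <= 0.
  move=> s hs; have := C1 (s *: x + y); rewrite !qform_comb -/a -/c0 -/k -/al -/be -/ga.
  by rewrite hs lexx => /(_ isT).
have F : forall s, s ^+ 2 * a + s * k + c0 = 0 ->
    (a * be - al * k) * s + (a * ga - al * c0) <= 0.
  move=> s hs.
  have -> : (a * be - al * k) * s + (a * ga - al * c0) =
     a * (s ^+ 2 * al + s * be + ga) - al * (s ^+ 2 * a + s * k + c0) by ring.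
  by rewrite hs mulr0 subr0 pmulr_rle0 // pz.
have F1 := F s1 hq1; have F2 := F s2 hq2.
nra.
Qed.
End Q.

Lemma sup_S (R : rcfType) (n : nat) (P Q : 'M[R]_n) :
  (forall x, 0 < qform Q x -> qform P x <= qform Q x) ->
  exists c, (forall t, (t = 0 \/ exists x, 0 < qform Q x /\ t * qform Q x = qform P x) -> t <= c)
   /\ (forall u, u < c -> exists t,
        (t = 0 \/ exists x, 0 < qform Q x /\ t * qform Q x = qform P x) /\ u < t).
Proof.
move=> ub.
set f := ordered_qelim.ord.to_rform (phi P Q).
have rf := ordered_qelim.ord.to_rform_rformula (phi P Q).
have := @ordered_qelim.ord.quantifier_elim_wf R _ (@qe_rcf.wf_QE_wproj R) f rf.
set psi := ordered_qelim.ord.quantifier_elim _ _ => /andP[qp rp].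
have equiv : forall t, (t = 0 \/ exists x, 0 < qform Q x /\ t * qform Q x = qform P x)
    <-> ordered_qelim.ord.qf_eval [:: t] psi.
  move=> t.
  have H := @ordered_qelim.ord.quantifier_elim_rformP R _ (@qe_rcf.wf_QE_wproj R)
     (@qe_rcf.valid_QE_wproj R) [:: t] f rf.
  rewrite -/psi in H.
  apply: (iff_trans (iff_sym (holds_phi P Q t))).
  apply: (iff_trans (iff_sym (ordered_qelim.ord.to_rformP [:: t] (phi P Q)))).
  by split => [/H|/H].
have [rs Hrs] := qf_bp [::] qp rp.
apply: (@sup_bp R _ rs).
- move=> t1 t2 le12 nb; have e := Hrs t1 t2 le12 nb.
  split => /equiv; [rewrite e | rewrite -e] => h; exact/equiv.
- by exists 0; left.
- exists 1 => t [->|[x [qx e]]]; first exact: ler01.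
  by rewrite -(ler_pM2r qx) mul1r e; apply: ub.
Qed.

Theorem theorem3p13 (R : rcfType) (n : nat) (Q A : 'M[R]_n) (hQ : Q^T = Q) :
  invariant_set A (sublevel1 Q) <->
  exists mu : R, 0 <= mu <= 1 /\ neg_semidef (A^T *m Q *m A - mu *: Q).
Proof.
clear hQ.
have pA : forall x, qform Q (A *m x) = qform (A^T *m Q *m A) x by move=> x; apply: qform_mul.
split.
- move=> inv.
  have inv' : forall x, qform Q x <= 1 -> qform (A^T *m Q *m A) x <= 1.
    by move=> x /inv; rewrite /sublevel1 pA.
  have C1 : forall x, qform Q x <= 0 -> qform (A^T *m Q *m A) x <= 0.
    move=> x qx; rewrite leNgt; apply/negP => px.
    pose k := 1 + (qform (A^T *m Q *m A) x)^-1.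
    have k1 : 1 <= k by rewrite /k lerDl invr_ge0 ltW.
    have kp : k * qform (A^T *m Q *m A) x = qform (A^T *m Q *m A) x + 1.
      by rewrite /k mulrDl mul1r mulVf ?gt_eqF.
    have h := inv' (k *: x); rewrite !qformZ in h.
    have : k ^+ 2 * qform (A^T *m Q *m A) x <= 1 by apply: h; nra.
    nra.
  have C2 : forall x, 0 < qform Q x -> qform (A^T *m Q *m A) x <= qform Q x.
    move=> x qx; pose k := (Num.sqrt (qform Q x))^-1.
    have k2 : k ^+ 2 = (qform Q x)^-1 by rewrite /k exprVn sqr_sqrtr // ltW.
    have := inv' (k *: x); rewrite !qformZ k2 mulVf ?gt_eqF // lexx => /(_ isT).
    by rewrite mulrC ler_pdivrMr // mul1r.
  have [c [Hub Hlub]] := sup_S C2.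
  have c0 : 0 <= c by apply: Hub; left.
  have c1 : c <= 1.
    rewrite leNgt; apply/negP => /Hlub [t [[->|[x [qx e]]] lt]]; first by lra.
    have := C2 x qx; rewrite -e => h; nra.
  exists c; split; first by rewrite c0 c1.
  move=> x; rewrite qformB subr_le0.
  have [qx|qx|qx] := ltgtP (qform Q x) 0.
  + set w := qform (A^T *m Q *m A) x / qform Q x.
    have hw : w * qform Q x = qform (A^T *m Q *m A) x by rewrite /w divfK ?lt_eqF.
    have cw : c <= w.
      rewrite leNgt; apply/negP => /Hlub [t [[->|[x' [qx' e]]] lt]].
        have : 0 <= w.
          by apply: mulr_le0; [apply: C1; exact: ltW | rewrite invr_le0; exact: ltW].
        by lra.
      have := twoD C1 qx' qx; rewrite -e -hw => h.
      have qq : 0 < - (qform Q x * qform Q x') by rewrite oppr_gt0 nmulr_rlt0.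
      have : 0 < (t - w) * - (qform Q x * qform Q x') by rewrite mulr_gt0 // subr_gt0.
      nra.
    nra.
  + have : qform (A^T *m Q *m A) x / qform Q x <= c.
      apply: Hub; right; exists x; split => //; by rewrite divfK ?gt_eqF.
    have hw : qform (A^T *m Q *m A) x / qform Q x * qform Q x = qform (A^T *m Q *m A) x.
      by rewrite divfK ?gt_eqF.
    nra.
  + by rewrite qx mulr0; apply: C1; rewrite qx.
- move=> [mu [/andP[m0 m1] nsd]] x; rewrite /sublevel1 pA => qx.
  have := nsd x; rewrite qformB subr_le0 => h.
  have [q0|q0] := leP 0 (qform Q x); nra.
Qed.
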